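(* Let $\Gamma$ be a finite undirected simple graph with vertices $x_1,\dots,x_n$ and edge set $E$, let $G_\Gamma$ be the associated group with commutator generators $y_1,\dots,y_N$ (notation as in the context). For any $z_1,\dots,z_n,t_1,\dots,t_N\in\mathbb{Z}$, \[h\Big(Z_{G_\Gamma}\Big(\prod_{i=1}^n x_i^{z_i}\prod_{l=1}^N y_l^{t_l}\Big)\Big)\le \min\Big\{n-1,\ \min_{\substack{i\in\{1,\dots,n\}\\ z_i\neq 0}}\deg(x_i)\Big\}+N+1,\] where $Z_{G_\Gamma}(g)$ is the centralizer of $g$, $h$ is the Hirsch number, and the inner minimum over an empty index set is interpreted as $+\infty$.
   Context: For a finite undirected simple graph $\Gamma$ with vertex set $\{x_1,\dots,x_n\}$ and edge set $E$, the group $G_\Gamma$ is defined by the presentation with generators $x_1,\dots,x_n$ and $y_{i,j}$ for each pair $i<j$ with $x_ix_j\notin E$, and relations $[x_j,x_i]=1$ if $x_ix_j\in E$; $[x_j,x_i]=y_{i,j}$ if $x_ix_j\notin E$ and $i<j$; and $[x_l,y_{i,j}]=1$ for all $l$ and all such $y_{i,j}$. Let $N$ be the number of pairs $i<j$ with $x_ix_j\notin E$, and enumerate the $y_{i,j}$ as $y_1,\dots,y_N$. Every element of $G_\Gamma$ is uniquely of the form $x_1^{z_1}\cdots x_n^{z_n}y_1^{t_1}\cdots y_N^{t_N}$. The Hirsch number $h(G)$ of a finitely generated nilpotent group $G$ is the number of infinite cyclic factors in any subnormal series of $G$ with cyclic factors. *)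

(* Defs.v *)
From HB Require Import structures.
From mathcomp Require Import all_boot all_order all_algebra.
Set Implicit Arguments. Unset Strict Implicit. Unset Printing Implicit Defensive.
Import Order.TTheory GRing.Theory Num.Theory.
Local Open Scope ring_scope.

Definition simple_graph (n : nat) (e : rel 'I_n) : Prop :=
  (forall i j, e i j = e j i) /\ (forall i, ~~ e i i).

Definition deg (n : nat) (e : rel 'I_n) (i : 'I_n) : nat := #|[set j | e i j]|.

(* index set of the generators y_{i,j}: pairs i<j with x_i x_j not an edge *)
Definition NE (n : nat) (e : rel 'I_n) : Type :=
  {p : 'I_n * 'I_n | (p.1 < p.2)%N && ~~ e p.1 p.2}.
HB.instance Definition _ n e := Finite.on (@NE n e).

Definition Nnonedges (n : nat) (e : rel 'I_n) : nat := #|{: NE e}|.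

(* Elements of G_Gamma in normal form x_1^{z_1}...x_n^{z_n} prod y_p^{t_p}. *)
Definition GG (n : nat) (e : rel 'I_n) : Type :=
  ({ffun 'I_n -> int} * {ffun NE e -> int})%type.

Section Group.
Variables (n : nat) (e : rel 'I_n).

(* Multiplication derived from [x_j,x_i] = x_j^-1 x_i^-1 x_j x_i = y_{i,j}
   (i<j, non-edge), i.e. x_j^a x_i^b = x_i^b x_j^a y_{i,j}^{ab}, y central. *)
Definition gmul (g h : GG e) : GG e :=
  ([ffun i => g.1 i + h.1 i],
   [ffun p : NE e => g.2 p + h.2 p + g.1 (val p).2 * h.1 (val p).1]).

Definition gone : GG e := ([ffun=> 0], [ffun=> 0]).

Definition ginv (g : GG e) : GG e :=
  ([ffun i => - g.1 i],
   [ffun p : NE e => - g.2 p + g.1 (val p).2 * g.1 (val p).1]).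

Definition gpown (g : GG e) (m : nat) : GG e := iter m (gmul g) gone.

Definition gpowz (g : GG e) (k : int) : GG e :=
  match k with
  | Posz m => gpown g m
  | Negz m => ginv (gpown g m.+1)
  end.

Definition subgroup (H : GG e -> Prop) : Prop :=
  [/\ H gone, (forall x y, H x -> H y -> H (gmul x y)) &
      (forall x, H x -> H (ginv x))].

Definition normal_in (K H : GG e -> Prop) : Prop :=
  forall k h, K k -> H h -> K (gmul (ginv h) (gmul k h)).

Definition cyclic_factor (H K : GG e -> Prop) : Prop :=
  exists2 c, H c & forall x, H x -> exists k : int, K (gmul x (ginv (gpowz c k))).

Definition infinite_factor (H K : GG e -> Prop) : Prop :=
  forall s : seq (GG e), exists2 x, H x & forall y, y \in s -> ~ K (gmul x (ginv y)).

Definition cyclic_series (H : GG e -> Prop) (k : nat) (S : nat -> GG e -> Prop) :=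
  [/\ (forall x, S 0%N x <-> H x),
      (forall x, S k x <-> x = gone) &
      (forall i, (i < k)%N ->
         [/\ subgroup (S i), subgroup (S i.+1),
             (forall x, S i.+1 x -> S i x),
             normal_in (S i.+1) (S i) & cyclic_factor (S i) (S i.+1)])].

(* h(H) <= m : every subnormal series of H with cyclic factors has at most m
   infinite (cyclic) factors.  (By the invariance of the Hirsch number this is
   the same as h(H) <= m.)  The boolean labelling f marks the infinite factors. *)
Definition hirsch_le (H : GG e -> Prop) (m : nat) : Prop :=
  forall (k : nat) (S : nat -> GG e -> Prop) (f : nat -> bool),
    cyclic_series H k S ->
    (forall i, (i < k)%N -> (f i <-> infinite_factor (S i) (S i.+1))) ->
    (\sum_(i < k) f i <= m)%N.

Definition centralizer (g : GG e) : GG e -> Prop := fun x => gmul g x = gmul x g.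

End Group.

(* Main.v *)
Require Import Defs.
From HB Require Import structures.
From mathcomp Require Import all_boot all_order all_algebra.
From mathcomp Require Import ring zify.
From Stdlib Require Import ClassicalEpsilon.
Import Order.TTheory GRing.Theory Num.Theory.
Set Implicit Arguments. Unset Strict Implicit. Unset Printing Implicit Defensive.
Local Open Scope ring_scope.

Section GroupFacts.
Variables (n : nat) (e : rel 'I_n).
Implicit Types (g h c : GG e).

Lemma eqGG g h : (forall i, g.1 i = h.1 i) -> (forall p, 2 * g.2 p = 2 * h.2 p) -> g = h.
Proof.
case: g h => [a s] [b u] /= H1 H2; congr pair; apply/ffunP => x; first exact: H1.
by have := H2 x; move/eqP; rewrite -subr_eq0 -mulrBr mulf_eq0 /= subr_eq0 => /eqP.
Qed.

Lemma gmulA g h c : gmul g (gmul h c) = gmul (gmul g h) c.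
Proof.
congr pair; apply/ffunP => x; rewrite !ffunE /=; ring.
Qed.

Lemma gmul1 g h i : (gmul g h).1 i = g.1 i + h.1 i.
Proof. by rewrite ffunE. Qed.
Lemma gmul2 g h p : (gmul g h).2 p = g.2 p + h.2 p + g.1 (val p).2 * h.1 (val p).1.
Proof. by rewrite ffunE. Qed.
Lemma ginv1 g i : (ginv g).1 i = - g.1 i.
Proof. by rewrite ffunE. Qed.
Lemma ginv2 g p : (ginv g).2 p = - g.2 p + g.1 (val p).2 * g.1 (val p).1.
Proof. by rewrite ffunE. Qed.

Definition X c (p : NE e) := c.1 (val p).2 * c.1 (val p).1.

Lemma gpownE c (m : nat) :
  (forall i, (gpown c m).1 i = m%:Z * c.1 i) /\
  (forall p, 2 * (gpown c m).2 p = 2 * m%:Z * c.2 p + m%:Z * (m%:Z - 1) * X c p).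
Proof.
rewrite /X; elim: m => [|m [IH1 IH2]].
  by split => [i|p]; rewrite /gpown /= ffunE; ring.
rewrite /gpown /= -/(gpown c m); split => [i|p]; rewrite !ffunE /=.
  rewrite IH1 -[m.+1]addn1 PoszD; ring.
rewrite mulrDr mulrDr IH2 IH1 -[m.+1]addn1 PoszD; ring.
Qed.

Lemma gpowzE c (k : int) :
  (forall i, (gpowz c k).1 i = k * c.1 i) /\
  (forall p, 2 * (gpowz c k).2 p = 2 * k * c.2 p + k * (k - 1) * X c p).
Proof.
case: k => m; first exact: gpownE.
change (gpowz c (Negz m)) with (ginv (gpown c m.+1)).
have [H1 H2] := gpownE c m.+1; rewrite /X in H2 *.
rewrite NegzE; split => [i|p]; rewrite ?ginv1 ?ginv2 ?H1.
  ring.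
rewrite mulrDr mulrN H2; ring.
Qed.

Lemma gpowz_add c a b : gmul (gpowz c a) (gpowz c b) = gpowz c (a + b).
Proof.
have [A1 A2] := gpowzE c a; have [B1 B2] := gpowzE c b; have [C1 C2] := gpowzE c (a+b).
apply: eqGG => [i|p]; rewrite ?gmul1 ?gmul2 ?A1 ?B1 ?C1; first ring.
rewrite C2 !mulrDr A2 B2 /X; ring.
Qed.

Lemma gpowz_inv c a : ginv (gpowz c a) = gpowz c (- a).
Proof.
have [A1 A2] := gpowzE c a; have [C1 C2] := gpowzE c (- a).
apply: eqGG => [i|p]; rewrite ?ginv1 ?ginv2 ?A1 ?C1; first ring.
rewrite C2 !mulrDr mulrN A2 /X; ring.
Qed.

Lemma gpowz_mul c a b : gpowz (gpowz c a) b = gpowz c (a * b).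
Proof.
have [A1 A2] := gpowzE c a; have [B1 B2] := gpowzE (gpowz c a) b.
have [C1 C2] := gpowzE c (a * b).
apply: eqGG => [i|p]; rewrite ?B1 ?A1 ?C1; first ring.
rewrite B2 C2 /X !A1.
have -> : 2 * b * (gpowz c a).2 p = b * (2 * (gpowz c a).2 p) by ring.
rewrite A2 /X; ring.
Qed.

Lemma subgroup_pow (H : GG e -> Prop) c k : subgroup H -> H c -> H (gpowz c k).
Proof.
case=> H1 HM HV Hc.
have Hn : forall m, H (gpown c m) by elim=> //= m IH; apply: HM.
by case: k => m /=; auto.
Qed.

End GroupFacts.
Section Rank.
Variable k : nat.
Implicit Type P : 'rV[rat]_k -> Prop.

Definition pb (Q : Prop) : bool := if excluded_middle_informative Q then true else false.
Lemma pbP Q : reflect Q (pb Q).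
Proof. by rewrite /pb; case: excluded_middle_informative => H; constructor. Qed.

Definition Ach P (d : nat) := exists r (M : 'M[rat]_(r,k)), (forall i, P (row i M)) /\ \rank M = d.
Definition rk P : nat := (\max_(d < k.+1 | pb (Ach P d)) d)%N.

Lemma rk_ub P r (M : 'M_(r,k)) : (forall i, P (row i M)) -> (\rank M <= rk P)%N.
Proof.
move=> HM; have lt : (\rank M < k.+1)%N by rewrite ltnS rank_leq_col.
have := @leq_bigmax_cond _ (fun d : 'I_k.+1 => pb (Ach P d)) (fun d : 'I_k.+1 => nat_of_ord d) (Ordinal lt).
apply; apply/pbP; by exists r, M.
Qed.

Lemma rk_att P : exists r (M : 'M_(r,k)), (forall i, P (row i M)) /\ \rank M = rk P.
Proof.
have H0 : pb (Ach P (@ord0 k)).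
  by apply/pbP; exists 0%N, 0; split; [case | rewrite mxrank0].
rewrite /rk (bigop.bigmax_eq_arg _ H0).
by case: arg_maxnP => // d /pbP [r [M [HM HR]]] _; exists r, M.
Qed.

Lemma rk_mono P Q : (forall v, P v -> Q v) -> (rk P <= rk Q)%N.
Proof.
move=> PQ; have [r [M [HM <-]]] := rk_att P; apply: rk_ub => i; exact: PQ.
Qed.

Lemma rk_le P : (rk P <= k)%N.
Proof. by have [r [M [HM <-]]] := rk_att P; exact: rank_leq_col. Qed.

Lemma rk_sub P m (W : 'M_(m,k)) : (forall v, P v -> (v <= W)%MS) -> (rk P <= \rank W)%N.
Proof.
move=> PW; have [r [M [HM <-]]] := rk_att P; apply: mxrankS.
by apply/row_subP => i; apply: PW.
Qed.

Lemma key_span P Q : (forall v, P v -> Q v) -> (rk Q <= rk P)%N ->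
  exists r (M : 'M_(r,k)), (forall i, P (row i M)) /\ forall v, Q v -> (v <= M)%MS.
Proof.
move=> PQ le; have [r [M [HM HR]]] := rk_att P; exists r, M; split => // v Qv.
pose M' := col_mx v M.
have HM' : forall i, Q (row i M').
  move=> i; rewrite -(splitK i); case: (split i) => j /=.
    by rewrite rowKu (_ : j = 0) ?row_id //; apply: ord_inj; case: j => [[]].
  by rewrite rowKd; apply: PQ.
have sub : (M <= M')%MS by apply/row_subP => i; rewrite -(rowKd i v M); exact: row_sub.
have := @rk_ub Q _ _ HM'; have := mxrank_leqif_sup sub; case=> _ Heq le2.
have : (M' <= M)%MS by rewrite -Heq eqn_leq (mxrankS sub) /= HR (leq_trans le2 le).
by rewrite col_mx_sub => /andP[].
Qed.

Lemma zclosed P : P 0 -> (forall u v, P u -> P v -> P (u + v)) -> (forall u, P u -> P (- u)) ->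
  forall (z : int) u, P u -> P (u *~ z).
Proof.
move=> P0 PD PN z u Pu.
have Hn : forall m, P (u *+ m) by elim=> [|m IH]; rewrite ?mulr0n // mulrS; apply: PD.
by case: z => m; [exact: Hn | rewrite NegzE mulrNz; apply: PN; exact: Hn].
Qed.

Lemma integ P : P 0 -> (forall u v, P u -> P v -> P (u + v)) -> (forall u, P u -> P (- u)) ->
  forall r (M : 'M_(r,k)), (forall i, P (row i M)) -> forall v, (v <= M)%MS ->
  exists m : int, 0 < m /\ P (m%:~R *: v).
Proof.
move=> P0 PD PN r M HM v /submxP [w ->].
exists (\prod_(j < r) denq (w 0 j)); split; first by apply: prodr_gt0 => j _; exact: denq_gt0.
rewrite scalemxAl mulmx_sum_row.
apply: (big_ind P) => // i _.
set z := numq (w 0 i) * \prod_(j < r | j != i) denq (w 0 j).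
have -> : ((\prod_(j < r) denq (w 0 j))%:~R *: w) 0 i = z%:~R :> rat.
  rewrite mxE (bigD1 i) //= rmorphM /= mulrC mulrA -numqE /z rmorphM /=; ring.
by rewrite scaler_int; apply: zclosed.
Qed.

End Rank.

Section Step.
Variables (n : nat) (e : rel 'I_n).
Implicit Types (g h c : GG e) (H K : GG e -> Prop).

Definition vpi g : 'rV[rat]_n := \row_i ((g.1 i)%:~R).
Definition vy g : 'rV[rat]_(Nnonedges e) := \row_j ((g.2 (enum_val j))%:~R).
Definition P1 H (v : 'rV[rat]_n) := exists g, H g /\ v = vpi g.
Definition P2 H (v : 'rV[rat]_(Nnonedges e)) :=
  exists g, H g /\ (forall i, g.1 i = 0) /\ v = vy g.

Lemma P1_mono H K : (forall x, K x -> H x) -> forall v, P1 K v -> P1 H v.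
Proof. by move=> KH v [g [Kg ->]]; exists g; split => //; apply: KH. Qed.
Lemma P2_mono H K : (forall x, K x -> H x) -> forall v, P2 K v -> P2 H v.
Proof. by move=> KH v [g [Kg [g0 ->]]]; exists g; split => //; apply: KH. Qed.

Section Sub.
Variable H : GG e -> Prop.
Hypothesis sH : subgroup H.

Lemma P1_0 : P1 H 0.
Proof. case: sH => H1 _ _; exists (gone e); split => //; apply/rowP => i; rewrite !mxE ffunE. by []. Qed.
Lemma P1_D u v : P1 H u -> P1 H v -> P1 H (u + v).
Proof.
case: sH => _ HM _ [g [Hg ->]] [h [Hh ->]]; exists (gmul g h); split; first exact: HM.
by apply/rowP => i; rewrite !mxE gmul1 rmorphD.
Qed.
Lemma P1_N u : P1 H u -> P1 H (- u).
Proof.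
case: sH => _ _ HV [g [Hg ->]]; exists (ginv g); split; first exact: HV.
by apply/rowP => i; rewrite !mxE ginv1 rmorphN.
Qed.
Lemma P2_0 : P2 H 0.
Proof. case: sH => H1 _ _; exists (gone e); split => //; split; first by move=> i; rewrite ffunE. apply/rowP => i; rewrite !mxE ffunE. by []. Qed.
Lemma P2_D u v : P2 H u -> P2 H v -> P2 H (u + v).
Proof.
case: sH => _ HM _ [g [Hg [g0 ->]]] [h [Hh [h0 ->]]]; exists (gmul g h); split; first exact: HM.
split; first by move=> i; rewrite gmul1 g0 h0 addr0.
by apply/rowP => i; rewrite !mxE gmul2 g0 mul0r addr0 rmorphD.
Qed.
Lemma P2_N u : P2 H u -> P2 H (- u).
Proof.
case: sH => _ _ HV [g [Hg [g0 ->]]]; exists (ginv g); split; first exact: HV.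
split; first by move=> i; rewrite ginv1 g0 oppr0.
by apply/rowP => i; rewrite !mxE ginv2 g0 mul0r addr0 rmorphN.
Qed.
End Sub.

End Step.

Section Step2.
Variables (n : nat) (e : rel 'I_n).
Implicit Types (g h c : GG e) (H K : GG e -> Prop).

Lemma step H K : subgroup H -> subgroup K -> (forall x, K x -> H x) ->
  cyclic_factor H K ->
  (rk (P1 H) <= rk (P1 K))%N -> (rk (P2 H) <= rk (P2 K))%N ->
  ~ infinite_factor H K.
Proof.
move=> sH sK KH [c Hc Hcyc] le1 le2 Hinf.
have [r1 [M1 [HM1 sp1]]] := key_span (P1_mono KH) le1.
have [m [m0 Pm]] := integ (P1_0 sK) (P1_D sK) (P1_N sK) HM1 (sp1 _ (ex_intro _ c (conj Hc erefl))).
case: Pm => g1 [Kg1 Eg1].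
have g1E : forall i, g1.1 i = m * c.1 i.
  move=> i; apply: (@intr_inj rat); move/rowP: Eg1 => /(_ i); rewrite !mxE => <-.
  by rewrite rmorphM.
pose y := gmul (gpowz c m) (ginv g1).
have Hy : H y by case: (sH) => _ HM HV; apply: HM; [exact: subgroup_pow | apply: HV; exact: KH].
have y0 : forall i, y.1 i = 0.
  move=> i; rewrite gmul1 ginv1 g1E; have [-> _] := gpowzE c m; ring.
have [r2 [M2 [HM2 sp2]]] := key_span (P2_mono KH) le2.
have [m' [m'0 Pm']] := integ (P2_0 sK) (P2_D sK) (P2_N sK) HM2 (sp2 _ (ex_intro _ y (conj Hy (conj y0 erefl)))).
case: Pm' => g2 [Kg2 [g20 Eg2]].
have g2E : forall p, g2.2 p = m' * y.2 p.
  move=> p; apply: (@intr_inj rat); move/rowP: Eg2 => /(_ (enum_rank p)); rewrite !mxE enum_rankK => <-.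
  by rewrite rmorphM.
have cM : gpowz c (m * m') = gmul (gpowz g1 m') g2.
  have [A1 A2] := gpowzE c m; have [B1 B2] := gpowzE g1 m'; have [C1 C2] := gpowzE c (m * m').
  apply: eqGG => [i|p]; rewrite ?gmul1 ?gmul2 ?C1 ?B1 ?g1E ?g20; first ring.
  rewrite mulr0 addr0 [RHS]mulrDr B2 C2 g2E /y gmul2 ginv2 ginv1 A1 !g1E /X !g1E.
  set q := (gpowz c m).2 p.
  have Q := A2 p; rewrite -/q /X in Q.
  apply/eqP; rewrite -subr_eq0; apply/eqP.
  transitivity (m' * ((2 * m * c.2 p + m * (m - 1) * (c.1 (val p).2 * c.1 (val p).1)) - 2 * q)); first ring.
  by rewrite Q subrr mulr0.
have KM : K (gpowz c (m * m')).
  rewrite cM; case: (sK) => _ HM _; apply: HM => //; exact: subgroup_pow.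
move: KM; set M := m * m' => KM.
have M0 : 0 < M by rewrite mulr_gt0.
pose s := map (fun r : nat => gpowz c r) (iota 0 `|M|%N).
have [x Hx Hnot] := Hinf s.
have [kk Kk] := Hcyc x Hx.
have E := divz_eq kk M.
move: E; set q := (kk %/ M)%Z; set r := (kk %% M)%Z => E.
have r0 : 0 <= r by rewrite /r modz_ge0 // gt_eqF.
have rM : r < M by rewrite /r ltz_pmod.
apply: (Hnot (gpowz c r)).
  apply/mapP; exists `|r|%N; first by rewrite mem_iota /= add0n; lia.
  by rewrite abszE ger0_norm.
have -> : gmul x (ginv (gpowz c r)) = gmul (gmul x (ginv (gpowz c kk))) (gpowz (gpowz c M) q).
  rewrite -gmulA gpowz_mul !gpowz_inv gpowz_add; congr (gmul x (gpowz c _)).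
  rewrite [in RHS]E; ring.
case: (sK) => _ HM _; apply: HM => //; exact: subgroup_pow.
Qed.
End Step2.

Section Deg.
Variables (n : nat) (e : rel 'I_n).

Lemma cent_key (He : simple_graph e) (z : {ffun 'I_n -> int}) (t : {ffun NE e -> int}) h
  (Ch : centralizer ((z, t) : GG e) h) (i0 l : 'I_n) :
  l != i0 -> ~~ e i0 l -> h.1 l * z i0 = z l * h.1 i0.
Proof.
move=> ne nel.
have Hp : forall p : NE e, z (val p).2 * h.1 (val p).1 = h.1 (val p).2 * z (val p).1.
  move=> p; have : (gmul ((z, t) : GG e) h).2 p = (gmul h ((z, t) : GG e)).2 p by rewrite Ch.
  rewrite !gmul2 /=.
  by rewrite [t p + h.2 p]addrC => /addrI.
case: (ltngtP i0 l) => [lt|lt|eq]; last by move: ne; rewrite (val_inj eq) eqxx.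
- have pP : ((i0, l).1 < (i0, l).2)%N && ~~ e (i0, l).1 (i0, l).2 by rewrite /= lt nel.
  have := Hp (exist _ (i0, l) pP); rewrite /= => E; by rewrite E.
- have pP : ((l, i0).1 < (l, i0).2)%N && ~~ e (l, i0).1 (l, i0).2.
    by rewrite /= lt He.1.
  have := Hp (exist _ (l, i0) pP); rewrite /= => E; by rewrite mulrC E mulrC.
Qed.

Lemma deg_bound (He : simple_graph e) (z : {ffun 'I_n -> int}) (t : {ffun NE e -> int}) i0 :
  z i0 != 0 -> (rk (P1 (centralizer ((z, t) : GG e))) <= (deg e i0).+1)%N.
Proof.
move=> zi0.
set S := [set j | e i0 j].
pose w0 : 'rV[rat]_n := \row_l (if l == i0 then 1 else if e i0 l then 0 else (z l)%:~R / (z i0)%:~R).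
pose B := \matrix_(a < #|S|) ('e_(enum_val a) : 'rV[rat]_n).
apply: (leq_trans (rk_sub (W := (w0 + B)%MS) _)).
  move=> v [h [Ch ->]].
  rewrite -(subrK ((h.1 i0)%:~R *: w0) (vpi h)).
  apply: addmx_sub; last by apply: scalemx_sub; exact: addsmxSl.
  apply: submx_trans (addsmxSr w0 B).
  rewrite [X in (X <= _)%MS]row_sum_delta.
  apply: summx_sub => l _.
  have [lS|lS] := boolP (l \in S).
    apply: scalemx_sub.
    have -> : 'e_l = row (enum_rank_in lS l) B by rewrite rowK enum_rankK_in.
    exact: row_sub.
  suff -> : (vpi h - (h.1 i0)%:~R *: w0) 0 l = 0 by rewrite scale0r sub0mx.
  rewrite !mxE.
  case: (l =P i0) => [->|/eqP ne]; first by rewrite mulr1 subrr.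
  move: lS; rewrite inE => /negbTE nel; rewrite nel.
  have key := cent_key He Ch ne (negbT nel).
  have zr : (z i0)%:~R != 0 :> rat by rewrite intr_eq0.
  apply/eqP; rewrite subr_eq0; apply/eqP.
  apply: (mulIf zr); rewrite mulrA mulfVK // -!rmorphM /= key mulrC; done.
rewrite (leq_trans (mxrank_adds_leqif w0 B).1) //.
by rewrite -[(deg e i0).+1]add1n leq_add //; [exact: (rank_leq_row w0) | exact: (rank_leq_row B)].
Qed.

End Deg.

Theorem lemma4p2 (n : nat) (e : rel 'I_n) (He : simple_graph e)
    (z : {ffun 'I_n -> int}) (t : {ffun NE e -> int}) :
  hirsch_le (centralizer ((z, t) : GG e))
    ((\big[minn/n]_(i < n | z i != 0%R) (deg e i).+1) + Nnonedges e)%N.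
Proof.
move=> kk S f [S0 Sk Hs] Hf.
pose D j := (rk (P1 (S j)) + rk (P2 (S j)))%N.
have step' : forall j, (j < kk)%N -> (f j + D j.+1 <= D j)%N.
  move=> j lt; have [sj sj1 inc _ cyc] := Hs j lt.
  have m1 := rk_mono (P1_mono inc); have m2 := rk_mono (P2_mono inc).
  case fj: (f j); last by rewrite add0n leq_add.
  have inf : infinite_factor (S j) (S j.+1) by apply: (Hf j lt).1; rewrite fj.
  have nc := step sj sj1 inc cyc.
  rewrite /D.
  case: (leqP (rk (P1 (S j))) (rk (P1 (S j.+1)))) => a.
    case: (leqP (rk (P2 (S j))) (rk (P2 (S j.+1)))) => b; first by case: (nc a b inf).
    lia.
  lia.
have acc : forall j, (j <= kk)%N -> (\sum_(i < j) f i + D j <= D 0)%N.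
  elim=> [|j IH] lt; first by rewrite big_ord0.
  rewrite big_ord_recr /=; have := IH (ltnW lt); have := step' j lt => h1 h2; rewrite -addnA; exact: leq_trans (leq_add (leqnn _) h1) h2.
have := acc kk (leqnn kk).
have b1 : (rk (P1 (S 0%N)) <= \big[minn/n]_(i < n | z i != 0%R) (deg e i).+1)%N.
  apply: (leq_trans (rk_mono (P1_mono (fun x => (S0 x).1)))).
  apply: (big_ind (fun x => rk (P1 (centralizer ((z, t) : GG e))) <= x)%N).
  - exact: rk_le.
  - by move=> a b Ha Hb; rewrite leq_min Ha Hb.
  - by move=> i zi; exact: deg_bound.
have b2 : (rk (P2 (S 0%N)) <= Nnonedges e)%N by exact: rk_le.
rewrite /D; lia.
Qed.
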